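(* Let $\Omega=\{1,\dots,n\}$, $u,w\in\mathbb{R}^n_{+}\setminus\{0\}$ and $p>1$. Define $f:2^{\Omega}\to\mathbb{R}$ by $f(\mathcal{S})=\sum_{s\in\mathcal{S}}u_s+\left(\sum_{s\in\mathcal{S}}w_s\right)^p$. Then $D[f]\le p\|w\|_1^{p-1}\|w\|_\infty$.
   Context: $D[f]=\max\{f(\mathcal{A}\cup\mathcal{B}\cup\{s\})-f(\mathcal{A}\cup\mathcal{B})-f(\mathcal{A}\cup\{s\})+f(\mathcal{A}):\mathcal{A},\mathcal{B}\subseteq\Omega,s\in\Omega,|\mathcal{A}|\le|\Omega|-1\}$. *)

(* Defs.v *)
From HB Require Import structures.
From mathcomp Require Import all_boot all_order all_algebra.
From mathcomp Require Import reals exp.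
Set Implicit Arguments. Unset Strict Implicit. Unset Printing Implicit Defensive.
Import Order.TTheory GRing.Theory Num.Theory.
Local Open Scope ring_scope.

(* The value at A = B = ∅ (any s) is 0, so when Ω is nonempty the
   maximum is >= 0 and using 0 as the neutral element of the iterated
   max gives exactly the maximum. *)
Definition Dmax (R : realDomainType) (T : finType) (f : {set T} -> R) : R :=
  \big[Num.max/0]_(A : {set T} | (#|A| <= #|T| - 1)%N)
    \big[Num.max/0]_(B : {set T})
      \big[Num.max/0]_(s : T)
        (f (A :|: B :|: [set s]) - f (A :|: B) - f (A :|: [set s]) + f A).

Definition fpow (R : realType) (n : nat) (u w : 'I_n -> R) (p : R)
  (S : {set 'I_n}) : R :=
  \sum_(s in S) u s + powR (\sum_(s in S) w s) p.

Definition norm1 (R : realDomainType) (n : nat) (w : 'I_n -> R) : R :=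
  \sum_(i < n) `|w i|.

Definition norminf (R : realDomainType) (n : nat) (w : 'I_n -> R) : R :=
  \big[Num.max/0]_(i < n) `|w i|.

(* Main.v *)
Require Import Defs.
From HB Require Import structures.
From mathcomp Require Import all_boot all_order all_algebra.
From mathcomp Require Import reals exp ring lra.
Import Order.TTheory GRing.Theory Num.Theory.
Local Open Scope ring_scope.

Lemma key (R : realType) (x z p : R) : 0 <= x -> x <= z -> 1 < p ->
  powR z p - powR x p <= p * powR z (p - 1) * (z - x).
Proof.
move=> x0 xz p1.
have z0 : 0 <= z by apply: le_trans xz.
have p0 : 0 < p by apply: lt_trans p1.
have pm0 : 0 < p - 1 by rewrite subr_gt0.
set q := p / (p - 1).
have q0 : 0 < q by rewrite divr_gt0.
have pq : p^-1 + q^-1 = 1.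
  rewrite /q invfM invrK; field; rewrite ?gt_eqF //.
have := conjugate_powR x0 (powR_ge0 z (p - 1)) p0 q0 pq.
rewrite -powRrM /q mulrCA divff ?gt_eqF // mulr1.
have hz : z * powR z (p - 1) = powR z p by rewrite mulr_powRB1.
move=> H.
have H2 : p * (x * powR z (p - 1)) <= powR x p + (p - 1) * powR z p.
  have := ler_wpM2l (ltW p0) H.
  have -> : p * (powR x p / p + powR z p / (p / (p - 1))) = powR x p + (p - 1) * powR z p.
    by field; rewrite ?gt_eqF.
  done.
rewrite mulrBr -hz; rewrite -hz in H2; nra.
Qed.
Lemma sum_add1 (R : realType) (n : nat) (F : 'I_n -> R) (S : {set 'I_n}) s :
  s \notin S -> \sum_(i in S :|: [set s]) F i = F s + \sum_(i in S) F i.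
Proof. by move=> sS; rewrite setUC big_setU1. Qed.

Lemma sum_le_all (R : realType) (n : nat) (F : 'I_n -> R) (S : {set 'I_n}) :
  (forall i, 0 <= F i) -> \sum_(i in S) F i <= \sum_i F i.
Proof.
move=> F0; rewrite big_mkcond /=; apply: ler_sum => i _.
by case: (i \in S).
Qed.

Lemma term (R : realType) (n : nat) (u w : 'I_n -> R) (p : R)
  (hu0 : forall i, 0 <= u i) (hw0 : forall i, 0 <= w i) (hp : 1 < p)
  (A B : {set 'I_n}) (s : 'I_n) :
  fpow u w p (A :|: B :|: [set s]) - fpow u w p (A :|: B)
   - fpow u w p (A :|: [set s]) + fpow u w p A
  <= p * powR (norm1 w) (p - 1) * norminf w.
Proof.
have p0 : 0 <= p by lra.
have p10 : 0 <= p - 1 by lra.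
have N10 : 0 <= norm1 w by apply: sumr_ge0 => i _.
have Ni0 : 0 <= norminf w.
  by rewrite /norminf; elim/big_ind: _ => // x y x0 y0; rewrite le_max x0.
have C0 : 0 <= p * powR (norm1 w) (p - 1) * norminf w.
  by rewrite mulr_ge0 // mulr_ge0 // powR_ge0.
have W0 : forall S : {set 'I_n}, 0 <= \sum_(i in S) w i.
  by move=> S; apply: sumr_ge0.
have mono : forall a b : R, 0 <= a -> a <= b -> powR a p <= powR b p.
  by move=> a b a0 ab; apply: ge0_ler_powR => //; rewrite nnegrE //; apply: le_trans ab.
rewrite /fpow.
have [sY|sY] := boolP (s \in A :|: B).
  have -> : A :|: B :|: [set s] = A :|: B by apply/setUidPl; rewrite sub1set.
  have [sA|sA] := boolP (s \in A).
    have -> : A :|: [set s] = A by apply/setUidPl; rewrite sub1set.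
    by rewrite subrr sub0r addNr.
  rewrite !sum_add1 //.
  have := hw0 s; have := W0 A => ? ?.
  have H := mono _ _ (W0 A) (_ : _ <= w s + \sum_(i in A) w i); rewrite ?lerDr in H.
  have {H}H := H ltac:(lra).
  have := hu0 s. lra.
have sA : s \notin A by apply: contra sY; rewrite inE => ->.
rewrite !sum_add1 //.
set WY := \sum_(i in A :|: B) w i.
set WA := \sum_(i in A) w i.
have ws0 := hw0 s; have WA0 := W0 A; have WY0 : 0 <= WY by apply: W0.
have H1 := mono _ _ WA0 (_ : WA <= w s + WA).
have {H1}H1 := H1 ltac:(lra).
have H2 := @key _ _ _ _ WY0 (_ : WY <= w s + WY) hp.
have {H2}H2 := H2 ltac:(lra).
rewrite addrC addrK in H2.
have H3 : w s + WY <= norm1 w.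
  rewrite -sum_add1 // /norm1.
  under [X in _ <= X]eq_bigr do rewrite ger0_norm //.
  exact: sum_le_all.
have H4 : powR (w s + WY) (p - 1) <= powR (norm1 w) (p - 1).
  apply: ge0_ler_powR => //; rewrite nnegrE //; apply: addr_ge0 => //.
have H5 : w s <= norminf w.
  rewrite /norminf; apply: le_trans (le_bigmax _ _ s); rewrite ger0_norm //.
have H6 : p * powR (w s + WY) (p - 1) * w s <= p * powR (norm1 w) (p - 1) * norminf w.
  apply: ler_pM => //; first by rewrite mulr_ge0 // powR_ge0.
  by apply: ler_wpM2l.
lra.
Qed.

Theorem mainTheorem16 (R : realType) (n : nat) (u w : 'I_n -> R) (p : R)
  (hu0 : forall i, 0 <= u i) (hu : exists i, u i != 0)
  (hw0 : forall i, 0 <= w i) (hw : exists i, w i != 0)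
  (hp : 1 < p) :
  Dmax (fpow u w p) <= p * powR (norm1 w) (p - 1) * norminf w.
Proof.
have C0' : 0 <= p * powR (norm1 w) (p - 1) * norminf w.
  have p0 : 0 <= p by lra.
  have N10 : 0 <= norm1 w by apply: sumr_ge0 => i _.
  have Ni0 : 0 <= norminf w.
    by rewrite /norminf; elim/big_ind: _ => // x y x0 y0; rewrite le_max x0.
  by rewrite mulr_ge0 // mulr_ge0 // powR_ge0.
rewrite /Dmax; apply: bigmax_le => // A _; apply: bigmax_le => // B _.
apply: bigmax_le => // s _; exact: term.
Qed.
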